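(* Consider single-shot measurement learning (SSML) as described in the context, with unchanged halting rule (halt when the recorded consecutive-success counter reaches $M_H$), where the recorded labels are corrupted according to either the binary-symmetric noise model or the false-negative noise model with parameter $q>0$. Then the halting time $T$ satisfies $$\mathbb{E}[T]\ge\mathbb{E}\big[X_{M_H}(1-q)\big]=\frac{1-(1-q)^{M_H}}{q(1-q)^{M_H}}.$$ In particular, for $qM_H\gg1$, $\mathbb{E}[T]\gtrsim\frac{1}{q}e^{qM_H}$.
   Context: Let $d\ge2$, $\mathcal{H}=\mathbb{C}^d$, $|\psi_\tau\rangle$ an unknown pure state available in arbitrarily many copies, $\{\hat U(\mathbf{p}):\mathbf{p}\in\mathcal{P}\subset\mathbb{R}^m\}$ a family of unitaries, $|f\rangle$ a fixed fiducial state, $F(\mathbf{p})=|\langle f|\hat U(\mathbf{p})|\psi_\tau\rangle|^2$. SSML with $\alpha,\beta>0$ and threshold $M_H\in\mathbb{N}$: at step $n$ a fresh copy is transformed by $\hat U(\mathbf{p}^{(n)})$ and measured with $\{|f\rangle\langle f|,\mathbb{1}-|f\rangle\langle f|\}$, producing a true outcome $y_n\in\{s,u\}$ with $\mathbb{P}(y_n=s\mid\text{past})=F(\mathbf{p}^{(n)})$. The controller only sees a recorded label $m_n\in\{s,u\}$. If $m_n=s$, the counter is incremented, $M_S^{(n)}=M_S^{(n-1)}+1$, and $\mathbf{p}^{(n+1)}=\mathbf{p}^{(n)}$; if $m_n=u$, $M_S^{(n)}=0$ and $\mathbf{p}^{(n+1)}=\mathbf{p}^{(n)}+\alpha(M_S^{(n-1)}+1)^{-\beta}\mathbf{r}_n$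 with $\mathbf{r}_n$ a random direction. The halting time is $T=\inf\{n\ge1:M_S^{(n)}=M_H\}$. Binary-symmetric noise (parameter $q\in(0,1/2)$): $\mathbb{P}(m_n\ne y_n)=q$, independently across steps and of all other randomness conditionally on the true label. False-negative noise (parameter $q\in(0,1)$): $\mathbb{P}(m_n=u\mid y_n=s)=q$, $\mathbb{P}(m_n=s\mid y_n=s)=1-q$, $\mathbb{P}(m_n=u\mid y_n=u)=1$, independently across steps. For $p\in(0,1)$ and $k\in\mathbb{N}$, $X_k(p)$ is the waiting time until the first occurrence of $k$ consecutive successes in an i.i.d. Bernoulli$(p)$ sequence. *)

(* Defs.v *)
From mathcomp Require Import all_boot all_order all_algebra.
From mathcomp Require Import all_classical all_reals all_analysis.
From mathcomp Require Import complex.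
Set Implicit Arguments. Unset Strict Implicit. Unset Printing Implicit Defensive.
Import Order.TTheory GRing.Theory Num.Theory.
Local Open Scope classical_set_scope.
Local Open Scope ring_scope.

Section Quantum.
Variable R : realType.

Definition cnorm2 (z : R[i]) : R := complex.Re z ^+ 2 + complex.Im z ^+ 2.

Definition adjmx (m n : nat) (A : 'M[R[i]]_(m, n)) : 'M[R[i]]_(n, m) :=
  (map_mx (@conjc R) A)^T.

Definition unitary (d : nat) (U : 'M[R[i]]_d) : Prop := U *m adjmx U = 1%:M.

Definition unit_state (d : nat) (v : 'cV[R[i]]_d) : Prop := adjmx v *m v = 1%:M.

Definition fidelity (d : nat) (f : 'cV[R[i]]_d) (U : 'M[R[i]]_d)
  (psi : 'cV[R[i]]_d) : R := cnorm2 ((adjmx f *m U *m psi) 0 0).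
End Quantum.

(* ---------- consecutive-success counter (true = s, false = u) ---------- *)
Definition runc (s : seq bool) : nat :=
  foldl (fun c (b : bool) => if b then c.+1 else 0%N) 0%N s.

(* M_S^(n) for the label sequence ms (labels indexed from 1) *)
Definition counter (ms : nat -> bool) (n : nat) : nat :=
  runc [seq ms i | i <- iota 1 n].

Section Halting.
Variable R : realType.
(* T = inf { n >= 1 | M_S^(n) = M_H }  (= +oo if the set is empty) *)
Definition halting_time (MH : nat) (ms : nat -> bool) : \bar R :=
  ereal_inf [set ((n%:R : R)%:E) | n in [set n | (1 <= n)%N /\ counter ms n = MH]].
End Halting.

Section Waiting.
Variable R : realType.
Definition first_hit (k : nat) (w : seq bool) : bool :=
  (runc w == k) && [forall j : 'I_(size w), runc (take j w) != k].

Definition word_prob (p : R) (n : nat) (w : n.-tuple bool) : R :=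
  \prod_(i < n) (if tnth w i then p else 1 - p).

Definition pX (k : nat) (p : R) (n : nat) : R :=
  \sum_(w : n.-tuple bool | first_hit k w) word_prob p w.

Definition EX (k : nat) (p : R) : \bar R :=
  (\sum_(n <oo) ((n%:R * pX k p n)%:E))%E.
End Waiting.

Section Filt.
Context {dsp : measure_display} {Omega : measurableType dsp}.

Definition is_filtration (G : nat -> set (set Omega)) : Prop :=
  forall n, sigma_algebra setT (G n) /\ G n `<=` measurable /\ G n `<=` G n.+1.

Definition G_measurable_fun (R : realType) (G : set (set Omega)) (f : Omega -> R) : Prop :=
  forall B : set R, measurable B -> G (f @^-1` B).
End Filt.

Section Noise.
Context {R : realType} {dsp : measure_display} {Omega : measurableType dsp}.
Variables (P : probability Omega R) (G : nat -> set (set Omega))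
          (y m : nat -> Omega -> bool) (q : R).

(* P(m_n <> y_n | past, y_n) = q *)
Definition bsc_noise : Prop :=
  forall n, (1 <= n)%N -> forall A, G n.-1 A -> forall b : bool,
    P (A `&` [set w | y n w = b] `&` [set w | m n w != y n w]) =
    (q%:E * P (A `&` [set w | y n w = b]))%E.

(* P(m_n = u | past, y_n = s) = q ,  P(m_n = u | y_n = u) = 1 *)
Definition fn_noise : Prop :=
  forall n, (1 <= n)%N ->
    (forall A, G n.-1 A ->
      P (A `&` [set w | y n w] `&` [set w | ~~ m n w]) =
      (q%:E * P (A `&` [set w | y n w]))%E) /\
    P ([set w | ~~ y n w] `&` [set w | m n w]) = 0%E.
End Noise.

(* Main.v *)
Require Import Defs.
From mathcomp Require Import all_boot all_order all_algebra.
From mathcomp Require Import all_classical all_reals all_analysis.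
From mathcomp Require Import complex.
From mathcomp.algebra_tactics Require Import ring lra.
From mathcomp Require Import zify.
Import Order.TTheory GRing.Theory Num.Theory.
Local Open Scope classical_set_scope.
Local Open Scope ring_scope.

Fixpoint allw (n : nat) : seq (seq bool) :=
  if n is n'.+1 then [seq rcons s b | s <- allw n', b <- [:: true; false]]
  else [:: [::]].

Lemma allwS n : allw n.+1 = [seq rcons s b | s <- allw n, b <- [:: true; false]].
Proof. by []. Qed.

Lemma mem_allw n s : (s \in allw n) = (size s == n).
Proof.
elim: n s => [|n IH] s.
  by rewrite inE; case: s.
rewrite allwS; apply/allpairsP/idP => [[[s' b] /= [Hs _ ->]]|].
  by rewrite size_rcons eqSS -IH.
case/lastP: s => [//|s' b]; rewrite size_rcons eqSS -IH => Hs.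
by exists (s', b) => /=; split => //; case: b.
Qed.

Lemma allw_uniq n : uniq (allw n).
Proof.
elim: n => [//|n IH].
rewrite allwS; apply: allpairs_uniq => //.
move=> [s1 b1] [s2 b2] _ _ /= E.
have := congr1 (@last bool false) E; rewrite !last_rcons => Eb.
subst b2; by rewrite (rcons_injl _ E).
Qed.

Lemma sum_tuple_allw (R : nmodType) n (F : seq bool -> R) :
  \sum_(w : n.-tuple bool) F w = \sum_(s <- allw n) F s.
Proof.
rewrite -big_enum /= -(big_map (fun t : n.-tuple bool => val t) xpredT F).
apply: perm_big; apply: uniq_perm.
- by rewrite map_inj_uniq ?enum_uniq //; exact: val_inj.
- exact: allw_uniq.
move=> s; rewrite mem_allw; apply/mapP/idP => [[t _ ->]|/eqP Hs].
  by rewrite size_tuple.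
by exists (Tuple (introT eqP Hs)) => //; rewrite mem_enum.
Qed.

Lemma sum_allwS (R : nmodType) n (F : seq bool -> R) :
  \sum_(s <- allw n.+1) F s = \sum_(s <- allw n) (F (rcons s true) + F (rcons s false)).
Proof.
rewrite allwS big_allpairs_dep /=; apply: eq_bigr => s _.
by rewrite big_cons big_cons big_nil addr0.
Qed.

Lemma runc_rcons s b : runc (rcons s b) = if b then (runc s).+1 else 0%N.
Proof. by rewrite /runc foldl_rcons. Qed.

Definition nh k s := all (fun j => runc (take j s) != k) (iota 0 (size s).+1).

Lemma forall_iota m (P : nat -> bool) :
  [forall j : 'I_m, P j] = all P (iota 0 m).
Proof.
apply/forallP/allP => [H j|H j].
  rewrite mem_iota add0n => /andP [_ Hj]; exact: (H (Ordinal Hj)).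
by apply: H; rewrite mem_iota add0n /=.
Qed.

Lemma fh_rcons k s b : first_hit k (rcons s b) = (runc (rcons s b) == k) && nh k s.
Proof.
rewrite /first_hit (forall_iota _ (fun j => runc (take j (rcons s b)) != k)).
rewrite size_rcons /nh; congr (_ && _).
apply: eq_in_all => j; rewrite mem_iota add0n ltnS /= => Hj.
by rewrite -cats1 takel_cat.
Qed.

Lemma nh_rcons k s b : nh k (rcons s b) = nh k s && (runc (rcons s b) != k).
Proof.
rewrite /nh size_rcons -(addn1 (size s).+1) iotaD all_cat add0n all_seq1; congr (_ && _).
  apply: eq_in_all => j; rewrite mem_iota add0n ltnS /= => Hj.
  by rewrite -cats1 takel_cat.
by rewrite take_oversize // size_rcons.
Qed.

Lemma nh_lt k s : (0 < k)%N -> nh k s -> (runc s < k)%N.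
Proof.
move=> k0; elim/last_ind: s => [//|s b IH].
rewrite nh_rcons => /andP [/IH H1 H2].
move: H2; rewrite runc_rcons; case: b => //= H2.
by rewrite ltn_neqAle H2 H1.
Qed.

Set Implicit Arguments. Unset Strict Implicit.

Section Bern.
Variables (R : realType) (p : R) (k : nat).
Hypotheses (p0 : 0 < p) (p1 : p < 1) (k0 : (0 < k)%N).

Definition fb (b : bool) : R := if b then p else 1 - p.
Definition wp (s : seq bool) : R := \prod_(b <- s) fb b.
Definition PX n := \sum_(s <- allw n) (if first_hit k s then wp s else 0).
Definition AA n := \sum_(s <- allw n) (if nh k s then wp s else 0).
Definition hh (c : nat) : R := (p^-1 ^+ k - p^-1 ^+ c) / (1 - p).
Definition HH n := \sum_(s <- allw n) (if nh k s then hh (runc s) * wp s else 0).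


Lemma pX_PX n : pX k p n = PX n.
Proof.
rewrite /pX big_mkcond /=.
rewrite (eq_bigr (fun w : n.-tuple bool => if first_hit k w then wp w else 0)).
  by rewrite (sum_tuple_allw _ n (fun s => if first_hit k s then wp s else 0)).
move=> w _; case: ifP => // _.
by rewrite /word_prob /wp big_tuple.
Qed.

Lemma wp_rcons s b : wp (rcons s b) = wp s * fb b.
Proof. by rewrite /wp big_rcons. Qed.

Lemma k0E : (0%N == k) = false.
Proof. by case: k k0. Qed.

Lemma PX0 : PX 0 = 0.
Proof. by rewrite /PX /= big_seq1 /first_hit /= k0E. Qed.

Lemma wp_ge0 s : 0 <= wp s.
Proof.
rewrite /wp; apply: prodr_ge0 => b _; rewrite /fb; case: b => /=; [exact: ltW | rewrite subr_ge0; exact: ltW].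
Qed.

Lemma AS n : AA n = AA n.+1 + PX n.+1.
Proof.
rewrite /AA /PX !sum_allwS -big_split /=; apply: eq_bigr => s _.
rewrite !fh_rcons !nh_rcons !runc_rcons !wp_rcons /fb k0E /=.
case: (nh k s) => /=; last by rewrite andbF !addr0.
rewrite andbT; case: eqP => _ /=; rewrite ?addr0 ?add0r; ring.
Qed.

Lemma hhk : hh k = 0.
Proof. by rewrite /hh subrr mul0r. Qed.

Lemma hrec c : hh c = 1 + p * hh c.+1 + (1 - p) * hh 0.
Proof.
rewrite /hh exprS expr0.
have pn0 : p != 0 by rewrite gt_eqF.
have qn0 : 1 - p != 0 by rewrite subr_eq0 eq_sym lt_eqF.
field; by rewrite qn0.
Qed.

Lemma HS n : HH n.+1 = HH n - AA n.
Proof.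
rewrite /AA /HH sum_allwS -sumrB; apply: eq_bigr => s _.
rewrite !nh_rcons !runc_rcons !wp_rcons /fb k0E /=.
case: (nh k s) => /=; last by rewrite !addr0 subr0.
rewrite (hrec (runc s)).
case: eqP => [->|_] /=; last by ring.
rewrite hhk; ring.
Qed.

Lemma Psi n : \sum_(j < n.+1) j%:R * PX j + n%:R * AA n + HH n = hh 0.
Proof.
elim: n => [|n IH].
  by rewrite big_ord_recr big_ord0 /= !mul0r !add0r /HH /= big_seq1 /nh /= k0E /wp big_nil mulr1.
rewrite big_ord_recr /= HS -IH (AS n) -natr1; ring.
Qed.

Lemma xge1 : 1 <= p^-1.
Proof. by rewrite invf_ge1 // ltW. Qed.

Lemma qgt0 : 0 < 1 - p.
Proof. by rewrite subr_gt0. Qed.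

Lemma hh_le0 c : hh c <= hh 0.
Proof.
rewrite /hh ler_pM2r ?invr_gt0 ?qgt0 // expr0 lerD2l lerN2.
exact: exprn_ege1 xge1.
Qed.

Lemma hh_ge1 c : (c < k)%N -> 1 <= hh c.
Proof.
move=> ck; rewrite /hh ler_pdivlMr ?qgt0 // mul1r.
have [m ->] : exists m, k = (c + m.+1)%N by exists (k - c.+1)%N; lia.
rewrite exprD exprS.
set y := p^-1 ^+ c; set z := p^-1 ^+ m; set x := p^-1.
have y1 : 1 <= y by exact: exprn_ege1 xge1.
have z1 : 1 <= z by exact: exprn_ege1 xge1.
have x1 := xge1.
have hx : x - 1 - (1 - p) = (1 - p) ^+ 2 / p.
  by rewrite /x; field; rewrite gt_eqF.
have : 0 <= (1 - p) ^+ 2 / p by apply: divr_ge0; [exact: sqr_ge0 | exact: ltW].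
rewrite -hx => h.
have e1 : x * z >= x by rewrite ler_peMr // (le_trans ler01 x1).
have e2 : 0 <= (y - 1) * (x * z - 1).
  apply: mulr_ge0; rewrite subr_ge0 //; exact: le_trans x1 e1.
have e3 : 0 <= 1 - p by rewrite ltW // qgt0.
nra.
Qed.

Lemma hh_ge0 c : (c <= k)%N -> 0 <= hh c.
Proof.
rewrite leq_eqVlt => /orP [/eqP ->|/hh_ge1 h]; first by rewrite hhk.
exact: le_trans ler01 h.
Qed.

Lemma AA_ge0 n : 0 <= AA n.
Proof. by apply: sumr_ge0 => s _; case: ifP => // _; exact: wp_ge0. Qed.

Lemma PX_ge0 n : 0 <= PX n.
Proof. by apply: sumr_ge0 => s _; case: ifP => // _; exact: wp_ge0. Qed.

Lemma AA_le_HH n : AA n <= HH n.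
Proof.
apply: ler_sum => s _; case: ifP => // /(nh_lt _ _ k0) ck.
by rewrite ler_peMl ?wp_ge0 ?hh_ge1.
Qed.

Lemma HH_le n : HH n <= hh 0 * AA n.
Proof.
rewrite /AA mulr_sumr; apply: ler_sum => s _; case: ifP => [_|_]; last by rewrite mulr0.
by rewrite ler_wpM2r ?wp_ge0 ?hh_le0.
Qed.

Lemma h0ge1 : 1 <= hh 0.
Proof. exact: hh_ge1. Qed.

Definition rho := 1 - (hh 0)^-1.

Lemma rho_ge0 : 0 <= rho.
Proof. by rewrite /rho subr_ge0 invf_le1 ?h0ge1 // (lt_le_trans ltr01 h0ge1). Qed.

Lemma rho_lt1 : rho < 1.
Proof. by rewrite /rho ltrBlDl ltrDr invr_gt0 (lt_le_trans ltr01 h0ge1). Qed.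

Lemma HH_geo n : HH n <= rho ^+ n * hh 0.
Proof.
elim: n => [|n IH].
  by rewrite expr0 mul1r /HH /= big_seq1 /nh /= k0E /wp big_nil mulr1.
rewrite HS exprS -mulrA.
have h0 : 0 < hh 0 := lt_le_trans ltr01 h0ge1.
have : HH n <= hh 0 * AA n := HH_le n.
rewrite -ler_pdivrMl // => hA.
apply: le_trans (_ : rho * HH n <= _); last by rewrite ler_wpM2l ?rho_ge0.
rewrite /rho mulrBl mul1r lerD2l lerN2; exact: hA.
Qed.

Lemma S_lb n : hh 0 - n.+1%:R * HH n <= \sum_(j < n.+1) j%:R * PX j.
Proof.
have := Psi n; move=> E.
have : \sum_(j < n.+1) j%:R * PX j = hh 0 - n%:R * AA n - HH n by rewrite -E; ring.
move=> ->; rewrite -natr1 mulrDl mul1r.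
have := AA_le_HH n; have : 0 <= n%:R :> R by [].
nra.
Qed.

Lemma S_ub n : \sum_(j < n) j%:R * PX j <= hh 0.
Proof.
case: n => [|n]; first by rewrite big_ord0 (le_trans ler01 h0ge1).
have := Psi n; move=> E.
have : \sum_(j < n.+1) j%:R * PX j = hh 0 - n%:R * AA n - HH n by rewrite -E; ring.
move=> ->.
have := AA_le_HH n; have := AA_ge0 n; have : 0 <= n%:R :> R by [].
nra.
Qed.

End Bern.

Lemma geo_bound (R : realType) (r : R) n : 0 <= r -> r < 1 ->
  n.+1%:R * r ^+ n * (1 - r) <= 1.
Proof.
move=> r0 r1.
suff : n.+1%:R * r ^+ n - n%:R * r ^+ n.+1 <= 1.
  rewrite exprS; have := exprn_ge0 n r0; have : 0 <= n%:R :> R by [].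
  rewrite -natr1; nra.
elim: n => [|n IH]; first by rewrite expr0 mul0r subr0 mulr1.
apply: le_trans IH.
have e : n.+2%:R * r ^+ n.+1 - n.+1%:R * r ^+ n.+2 =
   (n.+1%:R * r ^+ n - n%:R * r ^+ n.+1) - n.+1%:R * r ^+ n * (1 - r) ^+ 2.
  by rewrite -!natr1 !exprS; ring.
rewrite e lerBlDr lerDl; apply: mulr_ge0; last exact: sqr_ge0.
by apply: mulr_ge0 => //; exact: exprn_ge0.
Qed.

Section EXval.
Variables (R : realType) (p : R) (k : nat).
Hypotheses (p0 : 0 < p) (p1 : p < 1) (k0 : (0 < k)%N).

Lemma tail_small (e : R) : 0 < e ->
  exists N, hh p k 0 - e <= \sum_(j < N) j%:R * PX p k j.
Proof.
move=> e0.
set h0 := hh p k 0.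
have h01 : 1 <= h0 := h0ge1 p0 p1 k0.
have h0p : 0 < h0 := lt_le_trans ltr01 h01.
set r := rho p k.
have r0 : 0 <= r := rho_ge0 p0 p1 k0.
have r1 : r < 1 := rho_lt1 p0 p1 k0.
have h0r : 1 - r = h0^-1 by rewrite /r /rho opprB addrC subrK.
set n := Num.Def.archi_bound (2 * h0 ^+ 3 / e).
have hn : 2 * h0 ^+ 3 / e < n%:R.
  apply: archi_boundP; apply: divr_ge0 => //; last exact: ltW.
  by apply: mulr_ge0 => //; apply: exprn_ge0; exact: ltW.
exists (2 * n).+1.
apply: le_trans (S_lb p0 p1 k0 (2 * n)).
rewrite lerD2l lerN2.
have a1 : n.+1%:R * r ^+ n <= h0.
  by have := geo_bound n r0 r1; rewrite h0r ler_pdivrMr // mul1r.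
have rn0 : 0 <= r ^+ n := exprn_ge0 n r0.
have n1 : 0 < n.+1%:R :> R by rewrite ltr0n.
have a2 : r ^+ n <= h0 / n.+1%:R by rewrite ler_pdivlMr // mulrC.
have e00 := ler_wpM2l (ler0n R (2 * n).+1) (HH_geo p0 p1 k0 (2 * n)).
apply: le_trans e00 _.
have e1 : (2 * n).+1%:R * (r ^+ (2 * n) * h0) <= 2 * (n.+1%:R * r ^+ n) * r ^+ n * h0.
  have -> : 2 * (n.+1%:R * r ^+ n) * r ^+ n * h0 = (2 * n.+1)%:R * (r ^+ n * r ^+ n * h0).
    by rewrite natrM; ring.
  rewrite (_ : (2 * n = n + n)%N); last by lia.
  rewrite exprD; apply: ler_wpM2r.
    by apply: mulr_ge0; [exact: mulr_ge0 | exact: ltW].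
  rewrite ler_nat; lia.
apply: le_trans e1 _.
have e2 : 2 * (n.+1%:R * r ^+ n) * r ^+ n * h0 <= 2 * h0 * (h0 / n.+1%:R) * h0.
  have e2' := ler_pM (mulr_ge0 (ler0n _ _) rn0) rn0 a1 a2.
  have -> : 2 * (n.+1%:R * r ^+ n) * r ^+ n * h0 = (2 * h0) * (n.+1%:R * r ^+ n * r ^+ n) by ring.
  have -> : 2 * h0 * (h0 / n.+1%:R) * h0 = (2 * h0) * (h0 * (h0 / n.+1%:R)) by ring.
  apply: ler_wpM2l e2'; apply: mulr_ge0 => //; exact: ltW.
apply: le_trans e2 _.
have : 2 * h0 ^+ 3 < e * n%:R by rewrite -ltr_pdivrMl // mulrC.
move=> hh3.
have -> : 2 * h0 * (h0 / n.+1%:R) * h0 = 2 * h0 ^+ 3 / n.+1%:R by rewrite (exprS _ 2) expr2; field; rewrite gt_eqF.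
rewrite ler_pdivrMr //.
have : e * n%:R <= e * n.+1%:R by apply: ler_wpM2l; [exact: ltW | rewrite ler_nat].
move=> h4; apply: ltW; exact: lt_le_trans hh3 h4.
Qed.
End EXval.

Lemma EX_val (R : realType) (p : R) (k : nat) : 0 < p -> p < 1 -> (0 < k)%N ->
  EX k p = (hh p k 0)%:E.
Proof.
move=> p0 p1 k0.
rewrite /EX (_ : pX k p = PX p k); last by apply: funext => n; exact: pX_PX.
have ge0 : forall n, (0 <= n)%N -> true -> (0 <= ((n%:R * PX p k n)%:E))%E.
  by move=> n _ _; rewrite lee_fin mulr_ge0 ?PX_ge0.
apply/eqP; rewrite eq_le; apply/andP; split.
  apply: lime_le; first exact: is_cvg_nneseries ge0.
  apply: nearW => N /=.
  rewrite sumEFin big_mkord lee_fin; exact: S_ub.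
apply/lee_addgt0Pr => e e0.
have [N HN] := tail_small p0 p1 k0 e0.
apply: le_trans (leeD2r _ (nneseries_lim_ge N ge0)).
by rewrite sumEFin big_mkord -EFinD lee_fin -lerBlDr.
Qed.

Lemma EX0 (R : realType) (p : R) : EX 0 p = 0%E.
Proof.
rewrite /EX eseries0 // => n _ _; case: n => [|n]; first by rewrite mul0r.
rewrite /pX big1 ?mulr0 // => w /andP [_ /forallP H].
have hw : (0 < size w)%N by rewrite size_tuple.
by have := H (Ordinal hw); rewrite /= take0.
Qed.

Lemma counter0 ms : counter ms 0 = 0%N.
Proof. by []. Qed.

Lemma counterS ms n : counter ms n.+1 = if ms n.+1 then (counter ms n).+1 else 0%N.
Proof.
have E : iota 1 n.+1 = iota 1 n ++ [:: n.+1] by rewrite -[in LHS](addn1 n) iotaD add1n.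
rewrite /counter E map_cat /runc foldl_cat /=.
by case: (ms n.+1).
Qed.

Section SigAlg.
Variables (T : Type) (G : set (set T)).
Hypothesis hG : sigma_algebra setT G.

Lemma G0 : G set0. Proof. by case: hG. Qed.
Lemma GC A : G A -> G (~` A).
Proof. by case: hG => _ H _ /H; rewrite setTD. Qed.
Lemma GT : G setT.
Proof. by rewrite -setC0; apply: GC; exact: G0. Qed.
Lemma GU A B : G A -> G B -> G (A `|` B).
Proof.
move=> hA hB; case: hG => _ _ H.
have -> : A `|` B = \bigcup_i (if i is 0%N then A else B).
  apply/seteqP; split => w /=.
    by case=> h; [exists 0%N | exists 1%N].
  by case=> [[|i]] _ h; [left | right].
by apply: H => -[|i].
Qed.
Lemma GI A B : G A -> G B -> G (A `&` B).
Proof.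
move=> hA hB; rewrite -(setCK (A `&` B)) setCI; apply: GC; apply: GU; exact: GC.
Qed.
End SigAlg.

Lemma E2gen (R : realType) (K : nat) (h U W : nat -> R) (a : R) :
  (0 < K)%N -> h K = 0 -> U 0%N = a -> (forall c, (c.+1 < K)%N -> U c.+1 = W c) ->
  \sum_(c < K) h c * U c = h 0%N * a + \sum_(c < K) h c.+1 * W c.
Proof.
case: K => [//|K'] _ hK U0 US.
rewrite big_ord_recl big_ord_recr /= hK mul0r addr0 U0; congr (_ + _).
by apply: eq_bigr => i _; rewrite US // ltnS ltn_ord.
Qed.

Lemma sum_lt n i : (\sum_(j < n) (j < i)%N = minn n i)%N.
Proof.
elim: n => [|n IH]; first by rewrite big_ord0 min0n.
rewrite big_ord_recr /= IH; case: (ltnP n i) => h; lia.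
Qed.

Lemma int_mono (R : realType) (dsp : measure_display) (Omega : measurableType dsp)
  (P : probability Omega R) (f g : Omega -> \bar R) :
  (forall x, (0 <= f x)%E) -> (forall x, (f x <= g x)%E) ->
  (\int[P]_x f x <= \int[P]_x g x)%E.
Proof.
move=> f0 fg.
have g0 : forall x, (0 <= g x)%E by move=> x; exact: le_trans (f0 x) (fg x).
rewrite !ge0_integralTE //; apply: ereal_sup_le => _ [h hf <-].
by exists h => // x; exact: le_trans (hf x) (fg x).
Qed.

Section Prob.
Context (R : realType) (dsp : measure_display) (Omega : measurableType dsp)
  (P : probability Omega R).
Variables (G : nat -> set (set Omega)) (mlab : nat -> Omega -> bool) (q : R) (k : nat).
Hypotheses (hG : is_filtration G) (hm_ad : forall n, G n [set w | mlab n w])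
  (k0 : (0 < k)%N) (q0 : 0 < q) (q1 : q < 1)
  (hnoise : forall n A, G n A ->
     (q%:E * P A <= P (A `&` [set w | ~~ mlab n.+1 w]))%E).

Definition pr (A : set Omega) : R := fine (P A).

Lemma prE A : measurable A -> P A = (pr A)%:E.
Proof. by move=> mA; rewrite /pr fineK // fin_num_measure. Qed.

Lemma pr_ge0 A : 0 <= pr A.
Proof. by rewrite /pr fine_ge0. Qed.

Lemma pr_split X Z : measurable X -> measurable Z ->
  pr X = pr (X `&` Z) + pr (X `&` ~` Z).
Proof.
move=> mX mZ.
have mXZ : measurable (X `&` Z) by exact: measurableI.
have mXZ' : measurable (X `&` ~` Z) by apply: measurableI => //; exact: measurableC.
have E : X = (X `&` Z) `|` (X `&` ~` Z) by rewrite -setIUr setUv setIT.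
apply: EFin_inj; rewrite -!prE // EFinD -!prE //.
rewrite {1}E measureU //.
by rewrite setIACA setICr setI0.
Qed.

Lemma Gsig n : sigma_algebra setT (G n). Proof. by case: (hG n). Qed.
Lemma Gmeas n A : G n A -> measurable A. Proof. by case: (hG n) => _ [H _] /H. Qed.
Lemma Gmono m n : (m <= n)%N -> forall A, G m A -> G n A.
Proof.
elim: n => [|n IH]; first by rewrite leqn0 => /eqP ->.
rewrite leq_eqVlt => /orP [/eqP -> //|]; rewrite ltnS => /IH H A /H.
by case: (hG n) => _ [_]; apply.
Qed.

Definition CC n w := counter (fun i => mlab i w) n.
Definition Dn n := [set w | forall i, (1 <= i <= n)%N -> CC i w != k].
Definition Ev n c := Dn n `&` [set w | CC n w = c].

Lemma setC_bool (b : Omega -> bool) : ~` [set w | b w] = [set w | ~~ b w].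
Proof. by apply/seteqP; split => w /=; case: (b w). Qed.

Lemma G_Ceq n c : G n [set w | CC n w = c].
Proof.
elim: n c => [|n IH] c.
  case: c => [|c].
    by have -> : [set w | CC 0 w = 0%N] = setT; [apply/seteqP; split | exact: (GT (Gsig 0))].
  by have -> : [set w | CC 0 w = c.+1] = set0; [apply/seteqP; split | exact: (G0 (Gsig 0))].
case: c => [|c].
  have -> : [set w | CC n.+1 w = 0%N] = ~` [set w | mlab n.+1 w].
    by apply/seteqP; split => w /=; rewrite /CC counterS; case: (mlab n.+1 w).
  exact: (GC (Gsig n.+1) (hm_ad n.+1)).
have -> : [set w | CC n.+1 w = c.+1] = [set w | CC n w = c] `&` [set w | mlab n.+1 w].
  apply/seteqP; split => w /=; rewrite /CC counterS; case: (mlab n.+1 w) => //=.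
  - by case.
  - by case => -> .
  - by case.
apply: (GI (Gsig n.+1)); last exact: hm_ad.
exact: (Gmono (leqnSn n) (IH c)).
Qed.

Lemma DnS n : Dn n.+1 = Dn n `&` ~` [set w | CC n.+1 w = k].
Proof.
apply/seteqP; split => w /=.
  move=> H; split; first by move=> i /andP [i1 i2]; apply: H; rewrite i1 /= (leq_trans i2).
  by move=> /eqP; apply/negP; apply: H; rewrite /= ltnS leqnn.
move=> [H1 H2] i /andP [i1]; rewrite leq_eqVlt => /orP [/eqP ->|]; last by rewrite ltnS => i2; apply: H1; rewrite i1.
by apply/eqP.
Qed.

Lemma Dn0 : Dn 0 = setT.
Proof. by apply/seteqP; split => w //= _ i /andP [i1 i2]; have : (1 <= 0)%N := leq_trans i1 i2. Qed.

Lemma G_D n : G n (Dn n).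
Proof.
elim: n => [|n IH]; first by rewrite Dn0; exact: (GT (Gsig 0)).
rewrite DnS; apply: (GI (Gsig n.+1)); first exact: (Gmono (leqnSn n) IH).
apply: (GC (Gsig n.+1)); exact: G_Ceq.
Qed.

Lemma G_Ev n c : G n (Ev n c).
Proof. exact: (GI (Gsig n) (G_D n) (G_Ceq n c)). Qed.

Lemma D_lt n w : Dn n w -> (CC n w < k)%N.
Proof.
elim: n => [|n IH]; first by rewrite /CC counter0.
rewrite DnS => -[/IH h1 /= /eqP h2].
rewrite /CC counterS; move: h2; rewrite /CC counterS.
case: (mlab n.+1 w) => // h2; by rewrite ltn_neqAle h2 h1.
Qed.

Lemma D_mono m n : (m <= n)%N -> Dn n `<=` Dn m.
Proof.
move=> mn w H i /andP [i1 i2]; apply: H; rewrite i1 /=; exact: leq_trans i2 mn.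
Qed.

Lemma pr0 : pr set0 = 0.
Proof. by rewrite /pr measure0. Qed.

Lemma partition (X : set Omega) (f : Omega -> nat) K :
  measurable X -> (forall c, measurable (X `&` [set w | f w = c])) ->
  measurable (X `&` [set w | (f w < K)%N]) /\ pr (X `&` [set w | (f w < K)%N]) = \sum_(c < K) pr (X `&` [set w | f w = c]).
Proof.
move=> mX mXf; elim: K => [|K [IH1 IH2]].
  have -> : X `&` [set w | (f w < 0)%N] = set0 by apply/seteqP; split => w // [].
  by split; [exact: measurable0 | rewrite big_ord0 pr0].
have E : X `&` [set w | (f w < K.+1)%N] =
    (X `&` [set w | (f w < K)%N]) `|` (X `&` [set w | f w = K]).
  apply/seteqP; split => w /=.
    move=> [xw]; rewrite ltnS leq_eqVlt => /orP [/eqP->|]; by [right | left].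
  by case => -[xw h]; split => //; [lia | rewrite h].
rewrite E; split; first by apply: measurableU.
rewrite (pr_split _ (mXf K)); last by apply: measurableU.
rewrite big_ord_recr /= -IH2 addrC; congr (_ + _); congr pr; apply/seteqP; split => w /=.
- by case=> -[hY|hZ] hnZ.
- by move=> h; split => //; right.
- by case=> -[hY|hZ] hnZ //; case: (hnZ hZ).
- move=> [xw h]; split; first by left.
  by move=> [_ h']; move: h; rewrite h' ltnn.
Qed.

Lemma Ev_meas n c : measurable (Ev n c).
Proof. exact: Gmeas (G_Ev n c). Qed.
Lemma Dn_meas n : measurable (Dn n).
Proof. exact: Gmeas (G_D n). Qed.

Definition u n c := pr (Ev n c).
Definition t n := pr (Dn n).
Definition hq := hh (1 - q) k.

Lemma t_sum n : t n = \sum_(c < k) u n c.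
Proof.
have [_ <-] := partition k (Dn_meas n) (fun c => Ev_meas n c).
rewrite /t; congr pr; apply/seteqP; split => w /=; last by case.
by move=> h; split => //; exact: D_lt h.
Qed.

Definition Phi n := \sum_(j < n) t j + \sum_(c < k) hq c * u n c.

Lemma p0' : 0 < 1 - q. Proof. by rewrite subr_gt0. Qed.
Lemma p1' : 1 - q < 1. Proof. by rewrite ltrBlDr ltrDl. Qed.

Lemma Phi_step n : Phi n <= Phi n.+1.
Proof.
set NM := [set w | ~~ mlab n.+1 w]; set M := [set w | mlab n.+1 w].
have mM : measurable M := Gmeas (hm_ad n.+1).
have mNM : measurable NM by rewrite /NM -setC_bool; exact: measurableC.
have ev0 : Ev n.+1 0 = Dn n `&` NM.
  rewrite /Ev DnS; apply/seteqP; split => w /=.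
    move=> [[h1 _]]; rewrite /NM /= /CC counterS; case: (mlab n.+1 w) => //= _.
  move=> [h1 h2]; have e : CC n.+1 w = 0%N.
    by rewrite /CC counterS; move: h2; rewrite /NM /=; case: (mlab n.+1 w).
  split => //; split => //; rewrite e => h; move: k0; by rewrite -h.
have evS c : (c.+1 < k)%N -> Ev n.+1 c.+1 = Ev n c `&` M.
  move=> ck; rewrite /Ev DnS; apply/seteqP; split => w /=.
    move=> [[h1 _]]; rewrite /M /= /CC counterS; case: (mlab n.+1 w) => //= -[h]; by split.
  move=> [[h1 h2] h3]; have e : CC n.+1 w = c.+1 by rewrite /CC counterS h3 -/(CC n w) h2.
  split => //; split => //; rewrite e => hk; by move: ck; rewrite hk ltnn.
have u0 : u n.+1 0 = \sum_(c < k) pr (Ev n c `&` NM).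
  have mX : measurable (Dn n `&` NM) by apply: measurableI => //; exact: Dn_meas.
  have mXf c : measurable ((Dn n `&` NM) `&` [set w | CC n w = c]).
    by rewrite setIAC; apply: measurableI => //; exact: Ev_meas.
  have [_ E] := partition k mX mXf.
  rewrite /u ev0 (_ : Dn n `&` NM = (Dn n `&` NM) `&` [set w | (CC n w < k)%N]); last first.
    by apply/seteqP; split => w /=; [move=> [h1 h2]; split => //; exact: D_lt | case].
  by rewrite E; apply: eq_bigr => c _; rewrite setIAC.
have usplit c : u n c = pr (Ev n c `&` M) + pr (Ev n c `&` NM).
  by rewrite /u (pr_split (Ev_meas n c) mM) setC_bool.
have unoise c : q * u n c <= pr (Ev n c `&` NM).
  have := hnoise (G_Ev n c); rewrite (prE (Ev_meas n c)) prE ?lee_fin //.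
  by apply: measurableI => //; exact: Ev_meas.
rewrite /Phi big_ord_recr /= (t_sum n) -addrA lerD2l.
have E2 : \sum_(c < k) hq c * u n.+1 c =
   hq 0 * \sum_(c < k) pr (Ev n c `&` NM) + \sum_(c < k) hq c.+1 * pr (Ev n c `&` M).
  apply: (E2gen (h := hq) (U := u n.+1) (W := fun c => pr (Ev n c `&` M))) => //; first by rewrite /hq hhk.
  by move=> c hc; rewrite /u evS.
rewrite E2 mulr_sumr -!big_split /=; apply: ler_sum => c _.
have hr := hrec k p0' p1' c.
have hl : hq c.+1 <= hq 0 := hh_le0 k p0' p1' c.+1.
have hn := unoise c; have hs := usplit c.
have h0 : 0 <= (hq 0 - hq c.+1) * (pr (Ev n c `&` NM) - q * u n c).
  by apply: mulr_ge0; rewrite subr_ge0.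
rewrite /hq in hr hl h0 *.
move: hr hl h0 hn hs; set a := hh _ _ c; set b := hh _ _ c.+1; set z := hh _ _ 0.
set U := u n c; set V := pr _; set W := pr _.
move=> hr hl h0 hn hs.
rewrite hr hs; rewrite hs in hn h0.
nra.
Qed.

Lemma Phi0 : Phi 0 = hq 0.
Proof.
rewrite /Phi big_ord0 add0r.
case: k k0 => [//|k'] _.
rewrite big_ord_recl big1 ?addr0.
  rewrite /u (_ : Ev 0 0 = setT) /pr ?probability_setT ?mulr1 //.
  by apply/seteqP; split => w //= _; split => // i /andP [i1 i2]; move: (leq_trans i1 i2).
move=> i _; rewrite /u (_ : Ev 0 _ = set0) ?pr0 ?mulr0 //.
by apply/seteqP; split => w //= [].
Qed.

Lemma Phi_ge n : hq 0 <= Phi n.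
Proof.
elim: n => [|n IH]; first by rewrite Phi0.
exact: le_trans IH (Phi_step n).
Qed.

Lemma t_ge0 n : 0 <= t n. Proof. exact: pr_ge0. Qed.

Lemma S_a n : hq 0 * (1 - t n) <= \sum_(j < n) t j.
Proof.
have := Phi_ge n; rewrite /Phi.
have : \sum_(c < k) hq c * u n c <= hq 0 * t n.
  rewrite t_sum mulr_sumr; apply: ler_sum => c _.
  apply: ler_wpM2r; first exact: pr_ge0.
  exact: hh_le0 k p0' p1' c.
lra.
Qed.

Lemma t_mono m n : (m <= n)%N -> t n <= t m.
Proof.
move=> mn; rewrite /t -lee_fin -!prE; try exact: Dn_meas.
apply: (le_measure P); rewrite ?inE; [exact: Dn_meas | exact: Dn_meas | exact: D_mono].
Qed.

Lemma S_b n : n%:R * t n <= \sum_(j < n) t j.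
Proof.
have -> : n%:R * t n = \sum_(j < n) t n by rewrite sumr_const card_ord mulr_natl.
by apply: ler_sum => j _; apply: t_mono; exact: ltnW.
Qed.

Lemma T_ge w n : ((\sum_(j < n) (\1_(Dn j) w : R))%:E <= halting_time R k (fun i => mlab i w))%E.
Proof.
rewrite /halting_time; apply/ereal_infP => _ [i [i1 hi] <-]; rewrite lee_fin.
apply: (@le_trans _ _ (\sum_(j < n) ((j < i)%N)%:R)).
  apply: ler_sum => j _; rewrite indicE; case: (ltnP j i) => hj.
    by case: (_ \in _).
  rewrite memNset //= => H.
  have := H i; rewrite i1 hj => /(_ isT); rewrite /CC hi eqxx //.
rewrite -natr_sum ler_nat sum_lt; exact: geq_minr.
Qed.

Lemma int_ge n : ((\sum_(j < n) t j)%:E <= \int[P]_w halting_time R k (fun i => mlab i w))%E.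
Proof.
have f0 : forall w, (0 <= (\sum_(j < n) (\1_(Dn j) w : R))%:E)%E.
  by move=> w; rewrite lee_fin; apply: sumr_ge0 => j _; rewrite indicE.
apply: le_trans (@int_mono _ _ _ P (fun w => (\sum_(j < n) (\1_(Dn j) w : R))%:E)
   (fun w => halting_time R k (fun i => mlab i w)) f0 (T_ge ^~ n)).
rewrite (eq_integral (fun w => \sum_(j < n) (\1_(Dn j) w : R)%:E)); last by move=> w _; rewrite sumEFin.
rewrite (@ge0_integral_sum _ _ _ P _ measurableT _ (fun (j : 'I_n) (w : Omega) => (\1_(Dn j) w : R)%:E)); last 2 first.
- move=> j; apply/measurable_realfun.measurable_EFinP; exact: measurable_realfun.measurable_indic (Dn_meas j).
- by move=> j w _; rewrite lee_fin indicE.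
rewrite -sumEFin; apply: lee_sum => j _.
by rewrite integral_indic ?setIT /t -?prE //; exact: Dn_meas.
Qed.
End Prob.

Lemma final_ineq (R : realType) (I : \bar R) (h0 : R) (S t : nat -> R) :
  0 < h0 -> (forall n, (S n)%:E <= I)%E -> (forall n, h0 * (1 - t n) <= S n) ->
  (forall n, n%:R * t n <= S n) -> (forall n, 0 <= t n) -> (h0%:E <= I)%E.
Proof.
move=> h0p HI Ha Hb Ht.
have S0 : 0 <= S 0%N by apply: le_trans (Hb 0%N); rewrite mul0r.
case: I HI => [r| |] HI; last 2 first.
- exact: leey.
- by have := HI 0%N.
rewrite lee_fin leNgt; apply/negP => hr.
have r0 : 0 <= r by rewrite -lee_fin; apply: le_trans (HI 0%N); rewrite lee_fin.
set d := (h0 - r) / h0.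
have d0 : 0 < d by rewrite /d divr_gt0 // subr_gt0.
have td n : d <= t n.
  have := Ha n; have := HI n; rewrite lee_fin => h1 h2.
  rewrite /d ler_pdivrMr //; nra.
set n := Num.Def.archi_bound (r / d).
have hn : r / d < n%:R by apply: archi_boundP; apply: divr_ge0 => //; exact: ltW.
have := HI n; rewrite lee_fin => h1.
have h2 : n%:R * d <= n%:R * t n by apply: ler_wpM2l => //.
have := Hb n; rewrite ltr_pdivrMr // in hn; lra.
Qed.

Section Noise.
Context (R : realType) (dsp : measure_display) (Omega : measurableType dsp)
  (P : probability Omega R).
Variables (G : nat -> set (set Omega)) (y mlab : nat -> Omega -> bool) (q : R).
Hypotheses (hG : is_filtration G) (hy_ad : forall n, G n [set w | y n w])
  (hm_ad : forall n, G n [set w | mlab n w]).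

Lemma setI_bool (b1 b2 : Omega -> bool) :
  [set w | b1 w] `&` [set w | b2 w] = [set w | b1 w && b2 w].
Proof. by apply/seteqP; split => w /=; [case=> -> -> | case/andP]. Qed.

Lemma eq_setb (A : set Omega) (b1 b2 : Omega -> bool) : b1 =1 b2 ->
  A `&` [set w | b1 w] = A `&` [set w | b2 w].
Proof. by move=> e; congr (_ `&` _); apply/seteqP; split => w /=; rewrite e. Qed.

Lemma mS (b1 b2 : Omega -> bool) : measurable [set w | b1 w] -> measurable [set w | b2 w] ->
  measurable [set w | b1 w && b2 w].
Proof. by move=> m1 m2; rewrite -setI_bool; exact: measurableI. Qed.

Lemma mSN (b : Omega -> bool) : measurable [set w | b w] -> measurable [set w | ~~ b w].
Proof. by move=> m; rewrite -setC_bool; exact: measurableC. Qed.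

Lemma pr_splitb (A : set Omega) (b : Omega -> bool) (c : Omega -> bool) :
  measurable A -> measurable [set w | b w] -> measurable [set w | c w] ->
  pr P (A `&` [set w | b w]) =
  pr P (A `&` [set w | b w && c w]) + pr P (A `&` [set w | b w && ~~ c w]).
Proof.
move=> mA mb mc.
rewrite (pr_split P (X := A `&` [set w | b w]) (Z := [set w | c w])) //; last exact: measurableI.
by rewrite setC_bool -!setIA !setI_bool.
Qed.

Lemma noise_lb :
  (0 < q < 2^-1 /\ bsc_noise P G y mlab q) \/ (0 < q < 1 /\ fn_noise P G y mlab q) ->
  forall n A, G n A -> (q%:E * P A <= P (A `&` [set w | ~~ mlab n.+1 w]))%E.
Proof.
move=> hno n A hA.
have mA : measurable A := Gmeas hG hA.
set Y := y n.+1; set M := mlab n.+1.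
have mY : measurable [set w | Y w] := Gmeas hG (hy_ad n.+1).
have mM : measurable [set w | M w] := Gmeas hG (hm_ad n.+1).
have mNY := mSN mY; have mNM := mSN mM.
have mAY : measurable (A `&` [set w | Y w]) by exact: measurableI.
rewrite prE ?prE //; last exact: measurableI.
rewrite lee_fin.
have sA := pr_split P mA mY; rewrite setC_bool in sA.
have sNM := pr_splitb (b := fun w => ~~ M w) (c := Y) mA mNM mY.
have sNY := pr_splitb (b := fun w => ~~ Y w) (c := M) mA mNY mM.
have e2 : A `&` [set w | ~~ M w && Y w] = A `&` [set w | Y w] `&` [set w | ~~ M w].
  by rewrite -setIA setI_bool; apply: eq_setb => w; rewrite andbC.
have e3 : A `&` [set w | ~~ M w && ~~ Y w] = A `&` [set w | ~~ Y w && ~~ M w].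
  by apply: eq_setb => w; rewrite andbC.
rewrite e2 e3 in sNM.
have gA := pr_ge0 P (A `&` [set w | ~~ Y w]).
have gY := pr_ge0 P (A `&` [set w | Y w]).
have g3 := pr_ge0 P (A `&` [set w | ~~ Y w && M w]).
case: hno => [[/andP [q0 q2] hb]|[/andP [q0 q1] hf]].
- have := hb n.+1 isT A hA true.
  rewrite (_ : [set w | y n.+1 w = true] = [set w | Y w]) // -setIA setI_bool.
  rewrite (_ : A `&` [set w | Y w && (mlab n.+1 w != y n.+1 w)] =
             A `&` [set w | Y w] `&` [set w | ~~ M w]); last first.
    by rewrite -setIA setI_bool; apply: eq_setb => w; rewrite /Y /M; case: (y _ _); case: (mlab _ _).
  rewrite !prE //; last by apply: measurableI.
  rewrite -EFinM => HH; have ht := EFin_inj HH.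
  have := hb n.+1 isT A hA false.
  rewrite (_ : A `&` [set w | y n.+1 w = false] `&` [set w | mlab n.+1 w != y n.+1 w] =
             A `&` [set w | ~~ Y w && M w]); last first.
    rewrite -setIA; congr (_ `&` _); apply/seteqP; split => w /=; rewrite /Y /M;
      case: (y _ _); case: (mlab _ _) => //=; by case.
  rewrite (_ : A `&` [set w | y n.+1 w = false] = A `&` [set w | ~~ Y w]); last first.
    by congr (_ `&` _); apply/seteqP; split => w /=; rewrite /Y; case: (y _ _).
  rewrite !prE //; try (by apply: measurableI => //; exact: (mS mNY mM)).
  rewrite -EFinM => HH2; have hf := EFin_inj HH2.
  have hq : q <= 1 - q by lra.
  have : 0 <= (1 - q - q) * pr P (A `&` [set w | ~~ Y w]) by apply: mulr_ge0; lra.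
  nra.
- have [h1 h2] := hf n.+1 isT.
  have := h1 A hA; rewrite !prE //; last by apply: measurableI.
  rewrite -EFinM => HH; have ht := EFin_inj HH.
  have z3 : pr P (A `&` [set w | ~~ Y w && M w]) <= 0.
    have : (P (A `&` [set w | ~~ Y w && M w]) <= P ([set w | ~~ y n.+1 w] `&` [set w | mlab n.+1 w]))%E.
      apply: (le_measure P); rewrite ?inE.
      - by apply: measurableI => //; exact: (mS mNY mM).
      - exact: measurableI.
      - by rewrite setI_bool; apply: subIsetr.
    rewrite h2 prE ?lee_fin //; by apply: measurableI => //; exact: (mS mNY mM).
  have : 0 <= (1 - q) * pr P (A `&` [set w | ~~ Y w]) by apply: mulr_ge0; lra.
  nra.
Qed.
End Noise.

Unset Implicit Arguments. Set Strict Implicit.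

Theorem theorem4
  (R : realType) (dsp : measure_display) (Omega : measurableType dsp)
  (P : probability Omega R)
  (d : nat) (hd : (2 <= d)%N)
  (psi f : 'cV[R[i]]_d) (hpsi : unit_state psi) (hf : unit_state f)
  (dm : nat) (U : 'rV[R]_dm -> 'M[R[i]]_d) (hU : forall p, unitary (U p))
  (alpha beta : R) (halpha : 0 < alpha) (hbeta : 0 < beta)
  (MH : nat) (q : R)
  (G : nat -> set (set Omega)) (hG : is_filtration G)
  (p : nat -> Omega -> 'rV[R]_dm) (r : nat -> Omega -> 'rV[R]_dm)
  (y mlab : nat -> Omega -> bool) (p1 : 'rV[R]_dm)
  (* adaptedness: y_n, m_n, r_n are known at the end of step n *)
  (hy_ad : forall n, G n [set w | y n w])
  (hm_ad : forall n, G n [set w | mlab n w])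
  (hr_ad : forall n (j : 'I_dm), G_measurable_fun (G n) (fun w => r n w 0 j))
  (* r_n is a direction (unit vector) *)
  (hr_unit : forall n w, \sum_(j < dm) (r n w 0 j) ^+ 2 = 1)
  (* SSML parameter dynamics *)
  (hp1 : forall w, p 1%N w = p1)
  (hp_step : forall n w, (1 <= n)%N ->
     p n.+1 w = if mlab n w then p n w
                else p n w + (alpha * (((counter (fun i => mlab i w) n.-1).+1)%:R
                                         `^ (- beta))) *: r n w)
  (* true outcome: P(y_n = s | past) = F(p^(n)) *)
  (hy_law : forall n, (1 <= n)%N -> forall A, G n.-1 A ->
     P (A `&` [set w | y n w]) =
     (\int[P]_(w in A) (fidelity f (U (p n w)) psi)%:E)%E)
  (* noise model on the recorded labels *)
  (hnoise : (0 < q < 2^-1 /\ bsc_noise P G y mlab q) \/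
            (0 < q < 1 /\ fn_noise P G y mlab q)) :
  ((\int[P]_w (halting_time R MH (fun n => mlab n w)) >= EX MH (1 - q)) /\
   EX MH (1 - q) = ((1 - (1 - q) ^+ MH) / (q * (1 - q) ^+ MH))%:E)%E.
Proof.
have hn := noise_lb hG hy_ad hm_ad hnoise.
have [q0 q1] : 0 < q /\ q < 1.
  case: hnoise => [[/andP [q0 q2] _]|[/andP [q0 q1] _]]; split => //; lra.
case: MH => [|k].
  rewrite EX0 expr0 subrr mul0r; split => //.
  apply: integral_ge0 => w _; apply/ereal_infP => _ [i _ <-]; by rewrite lee_fin.
have k0 : (0 < k.+1)%N by [].
have pp0 : 0 < 1 - q by lra.
have pp1 : 1 - q < 1 by lra.
rewrite (EX_val pp0 pp1 k0); split.
  apply: (final_ineq (S := fun n => \sum_(j < n) t P mlab k.+1 j) (t := t P mlab k.+1)).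
  - exact: (lt_le_trans ltr01 (h0ge1 pp0 pp1 k0)).
  - move=> n; exact: int_ge.
  - move=> n; exact: (S_a hG hm_ad k0 q0 q1 hn).
  - move=> n; exact: S_b.
  - move=> n; exact: t_ge0.
congr EFin; rewrite /hh exprVn.
have : (1 - q) ^+ k.+1 != 0 by rewrite expf_neq0 // gt_eqF.
move=> hne; have qne : q != 0 by rewrite gt_eqF.
rewrite expr0 (_ : 1 - (1 - q) = q); last by ring.
field; by rewrite hne qne.
Qed.
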